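(* Let $H$ be an infinite dimensional real or complex Hilbert space and let $P,Q$ be projections on $H$ such that for every projection $R$ on $H$ with finite corank we have $RP=PR$ if and only if $RQ=QR$. Then either $P=Q$ or $P=I-Q$.
   Context: A projection means a self-adjoint idempotent bounded operator on $H$. A projection $R$ has finite corank if $I-R$ has finite rank. *)

(* Defs.v *)
From mathcomp Require Import all_boot all_algebra all_reals.
From mathcomp Require Export complex.
Import GRing.Theory Num.Theory.
Set Implicit Arguments. Unset Strict Implicit. Unset Printing Implicit Defensive.
Local Open Scope ring_scope.

(* Scalar field K (R for real, complex R for complex Hilbert spaces), with a
   conjugation [conj] (identity in the real case, Num.conj in the complex case).  Squared norm of x is
   [ip x x]; completeness is stated with squared norms (equivalent to norms). *)
Section Hilbert.
Variables (K : numFieldType) (V : lmodType K).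

Definition inner_product (conj : K -> K) (ip : V -> V -> K) : Prop :=
  [/\ (forall (a : K) (x x' y : V), ip (a *: x + x') y = a * ip x y + ip x' y),
      (forall x y : V, ip y x = conj (ip x y)),
      (forall x : V, 0 <= ip x x)
    & (forall x : V, ip x x = 0 -> x = 0)].

Definition ip_complete (ip : V -> V -> K) : Prop :=
  forall u : nat -> V,
    (forall e : K, 0 < e -> exists N : nat, forall m n : nat, (N <= m)%N -> (N <= n)%N ->
        ip (u m - u n) (u m - u n) < e) ->
    exists l : V, forall e : K, 0 < e -> exists N : nat, forall n : nat, (N <= n)%N ->
        ip (u n - l) (u n - l) < e.

Definition hilbert_space (conj : K -> K) (ip : V -> V -> K) : Prop :=
  inner_product conj ip /\ ip_complete ip.

Definition in_span (s : seq V) (x : V) : Prop :=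
  exists c : 'I_(size s) -> K, x = \sum_(i < size s) c i *: s`_i.

Definition infinite_dimensional : Prop :=
  forall s : seq V, exists x : V, ~ in_span s x.

Definition bounded_op (ip : V -> V -> K) (T : V -> V) : Prop :=
  exists M : K, forall x : V, ip (T x) (T x) <= M * ip x x.

Definition self_adjoint (ip : V -> V -> K) (T : V -> V) : Prop :=
  forall x y : V, ip (T x) y = ip x (T y).

Definition idempotent (T : V -> V) : Prop := forall x : V, T (T x) = T x.

Definition projection (ip : V -> V -> K) (T : {linear V -> V}) : Prop :=
  [/\ bounded_op ip T, self_adjoint ip T & idempotent T].

Definition finite_rank (T : V -> V) : Prop :=
  exists s : seq V, forall x : V, in_span s (T x).

Definition finite_corank (T : V -> V) : Prop := finite_rank (fun x => x - T x).

Definition ops_commute (A B : V -> V) : Prop := forall x : V, A (B x) = B (A x).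

End Hilbert.

(* Main.v *)
From HB Require Import structures.
Require Import Defs.
From mathcomp Require Import all_boot all_algebra all_reals.
From mathcomp Require Import ring.
From Stdlib Require Import Classical.
Import GRing.Theory Num.Theory.
Local Open Scope ring_scope.

Section Gen.
Variables (K : numFieldType) (V : lmodType K) (conj : K -> K).
Hypothesis conjD : forall a b, conj (a + b) = conj a + conj b.
Hypothesis conjM : forall a b, conj (a * b) = conj a * conj b.
Hypothesis conjV : forall a, conj (a^-1) = (conj a)^-1.
Hypothesis conj0 : conj 0 = 0.
Hypothesis conjN1 : conj (-1) = -1.
Variable ip : V -> V -> K.
Hypothesis Hip : inner_product conj ip.

Lemma ipDl x x' y : ip (x + x') y = ip x y + ip x' y.
Proof. by case: Hip => h _ _ _; rewrite -{1}[x]scale1r h mul1r. Qed.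
Lemma ip0l y : ip 0 y = 0.
Proof.
have e := ipDl 0 0 y; rewrite addr0 in e.
by apply: (@addrI _ (ip 0 y)); rewrite addr0 -e.
Qed.
Lemma ipZl a x y : ip (a *: x) y = a * ip x y.
Proof. by case: Hip => h _ _ _; rewrite -[a *: x]addr0 h ip0l addr0. Qed.
Lemma ipsym x y : ip y x = conj (ip x y).
Proof. by case: Hip. Qed.
Lemma ip0r x : ip x 0 = 0.
Proof. by rewrite ipsym ip0l conj0. Qed.
Lemma ipZr a x y : ip x (a *: y) = conj a * ip x y.
Proof. by rewrite ipsym ipZl conjM -ipsym. Qed.
Lemma ipNl x y : ip (- x) y = - ip x y.
Proof. by rewrite -scaleN1r ipZl mulN1r. Qed.
Lemma ipBl x x' y : ip (x - x') y = ip x y - ip x' y.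
Proof. by rewrite ipDl ipNl. Qed.
Lemma ipDr x y y' : ip x (y + y') = ip x y + ip x y'.
Proof. by rewrite ipsym ipDl conjD -!ipsym. Qed.
Lemma ipBr x y y' : ip x (y - y') = ip x y - ip x y'.
Proof. by rewrite ipDr -scaleN1r ipZr conjN1 mulN1r. Qed.
Lemma ip_ge0 x : 0 <= ip x x.
Proof. by case: Hip. Qed.
Lemma ip_eq0 x : ip x x = 0 -> x = 0.
Proof. by case: Hip => _ _ _; apply. Qed.
Lemma conjN u : conj (ip u u) = ip u u.
Proof. by rewrite -ipsym. Qed.

Definition Sf (u : V) (x : V) : V := x - (ip x u / ip u u) *: u.

Lemma Sf_lin u : linear (Sf u).
Proof.
move=> a x y; rewrite /Sf ipDl ipZl mulrDl scalerDl -mulrA -scalerA.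
rewrite scalerBr opprD !addrA; congr (_ - _); rewrite -!addrA; congr (_ + _).
by rewrite addrC.
Qed.

Definition Sl u : {linear V -> V} :=
  HB.pack (Sf u) (GRing.isLinear.Build K V V *:%R (Sf u) (Sf_lin u)).

Section U.
Variable u : V.
Hypothesis u0 : u != 0.
Let N := ip u u.
Lemma N0 : N != 0.
Proof. by apply/eqP => /ip_eq0 /eqP; rewrite (negbTE u0). Qed.

Lemma Sorth x : ip (Sf u x) u = 0.
Proof. by rewrite /Sf ipBl ipZl divfK ?subrr //; exact: N0. Qed.

Lemma Sl_proj : projection ip (Sl u).
Proof.
split.
- exists 1 => x; rewrite mul1r /=.
  set c := ip x u / ip u u.
  have dx : x = Sf u x + c *: u by rewrite /Sf subrK.
  move: (Sf u x) (Sorth x) dx => s so dx.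
  have -> : ip x x = ip s s + ip (c *: u) (c *: u).
    rewrite dx ipDl !ipDr ipZr so mulr0 addr0.
    by rewrite ipZl (ipsym s u) so conj0 mulr0 add0r.
  by rewrite lerDl ip_ge0.
- move=> x y /=; rewrite /Sf ipBl ipBr ipZl ipZr conjM conjV conjN -(ipsym y u).
  congr (_ - _); by rewrite mulrAC [in RHS]mulrC mulrA.
- move=> x /=; rewrite {1}/Sf Sorth mul0r scale0r subr0 //.
Qed.

Lemma Sl_corank : finite_corank (Sl u).
Proof.
exists [:: u] => x /=; exists (fun _ => ip x u / ip u u).
by rewrite big_ord1 /= /Sf opprB addrC subrK.
Qed.

Lemma Sl_comm (P : {linear V -> V}) : self_adjoint ip P -> Defs.idempotent P ->
  ops_commute (Sl u) P <-> (P u = 0 \/ P u = u).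
Proof.
move=> sa idm; split.
- move/(_ u) => /=; rewrite {2}/Sf mulfV ?N0 // scale1r subrr linear0.
  rewrite /Sf => /eqP; rewrite subr_eq0 => /eqP e.
  set l := ip (P u) u / ip u u in e.
  have := idm u; rewrite {1}e linearZ /= e scalerA => /eqP.
  rewrite -subr_eq0 -scalerBl scaler_eq0 (negbTE u0) orbF.
  have -> : l * l - l = l * (l - 1) by ring.
  rewrite mulf_eq0 subr_eq0 => /orP [] /eqP hl; rewrite hl ?scale0r ?scale1r;
  by [left | right].
- move=> hP x /=; rewrite /Sf linearB /= sa; have hz : forall c, P (c *: u) = c *: P u by move=> c; rewrite linearZ.
  by rewrite hz; case: hP => ->; rewrite ?ip0r ?mul0r ?scale0r ?scaler0.
Qed.
End U.

Definition E (T : {linear V -> V}) a := T a = 0 \/ T a = a.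

Lemma union (T : {linear V -> V}) (W : V -> Prop) :
  (forall a b, W a -> W b -> W (a + b)) -> (forall w, W w -> E T w) ->
  (forall w, W w -> T w = w) \/ (forall w, W w -> T w = 0).
Proof.
move=> Wd hE.
destruct (classic (forall w, W w -> T w = w)) as [h|h]; [by left|right].
move=> w2 Hw2; destruct (hE w2 Hw2) as [|e2]; auto.
destruct (classic (w2 = 0)) as [->|n2]; first by rewrite linear0.
exfalso; apply h => w1 Hw1.
destruct (hE w1 Hw1) as [e1|]; auto.
destruct (hE _ (Wd _ _ Hw1 Hw2)) as [e|e]; rewrite linearD e1 e2 add0r in e.
  by [].
have : w2 - w2 = w1 by rewrite {1}e addrK.
by rewrite subrr => <-; rewrite linear0.
Qed.

Lemma gen (P Q : {linear V -> V}) : projection ip P -> projection ip Q ->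
  (forall S : {linear V -> V}, projection ip S -> finite_corank S ->
     (ops_commute S P <-> ops_commute S Q)) ->
  P =1 Q \/ (forall x : V, P x = x - Q x).
Proof.
move=> [_ saP idP] [_ saQ idQ] H.
have HE : forall a, E P a <-> E Q a.
  move=> a; have [->|a0] := eqVneq a 0.
    by rewrite /E !linear0; split => _; left.
  rewrite /E -(@Sl_comm a a0 P saP idP) -(@Sl_comm a a0 Q saQ idQ).
  exact: H (@Sl_proj a a0) (Sl_corank a).
have Wr : forall a b, P a = a -> P b = b -> P (a + b) = a + b.
  by move=> a b ha hb; rewrite linearD ha hb.
have Wk : forall a b, P a = 0 -> P b = 0 -> P (a + b) = 0.
  by move=> a b ha hb; rewrite linearD ha hb addr0.
have [A|A] := @union Q _ Wr (fun w hw => proj1 (HE w) (or_intror hw));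
have [B|B] := @union Q _ Wk (fun w hw => proj1 (HE w) (or_introl hw)).
all: have dQ : forall x, Q x = Q (P x) + Q (x - P x)
       by move=> x; rewrite -linearD addrCA subrr addr0.
all: have kP : forall x, P (x - P x) = 0
       by move=> x; rewrite linearB idP subrr.
- have Qid : forall x, Q x = x by move=> x; rewrite dQ A // B // addrCA subrr addr0.
  have [C|C] := @union P (fun _ => True) (fun _ _ _ _ => I)
     (fun w _ => proj2 (HE w) (or_intror (Qid w))).
  + by left => x; rewrite C // Qid.
  + by right => x; rewrite C // Qid subrr.
- by left => x; rewrite dQ A // B // addr0.
- by right => x; rewrite dQ A // B // add0r opprB addrC subrK.
- have Q0 : forall x, Q x = 0 by move=> x; rewrite dQ A // B // addr0.
  have [C|C] := @union P (fun _ => True) (fun _ _ _ _ => I)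
     (fun w _ => proj2 (HE w) (or_introl (Q0 w))).
  + by right => x; rewrite C // Q0 subr0.
  + by left => x; rewrite C // Q0.
Qed.
End Gen.

Theorem lemma5 (R : realType) :
  (forall (V : lmodType R) (ip : V -> V -> R),
     hilbert_space (fun a : R => a) ip -> infinite_dimensional V ->
     forall P Q : {linear V -> V}, projection ip P -> projection ip Q ->
     (forall S : {linear V -> V}, projection ip S -> finite_corank S ->
        (ops_commute S P <-> ops_commute S Q)) ->
     P =1 Q \/ (forall x : V, P x = x - Q x))
  /\
  (forall (V : lmodType (complex R)) (ip : V -> V -> complex R),
     hilbert_space (@Num.conj _) ip -> infinite_dimensional V ->
     forall P Q : {linear V -> V}, projection ip P -> projection ip Q ->
     (forall S : {linear V -> V}, projection ip S -> finite_corank S ->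
        (ops_commute S P <-> ops_commute S Q)) ->
     P =1 Q \/ (forall x : V, P x = x - Q x)).
Proof.
split.
- move=> V ip [Hip _] _ P Q hP hQ H.
  by apply: (@gen R V (fun a => a)) Hip P Q hP hQ H.
- move=> V ip [Hip _] _ P Q hP hQ H.
  apply: (@gen _ V (@Num.conj _)) Hip P Q hP hQ H.
  + exact: rmorphD.
  + exact: rmorphM.
  + exact: fmorphV.
  + exact: rmorph0.
  + exact: rmorphN1.
Qed.
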